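(* Let $s$ be a positive integer. For each $\mathbf{i}\in\mathbb{Z}_{\ge 0}^h$ with $|\mathbf{i}|\le s$ there is a unique $\Omega_{s,\mathbf{i}}\in\mathcal{R}$ with $\deg_{\mathcal{H}}\Omega_{s,\mathbf{i}}\le \deg_{\mathcal{H}}\Lambda_s+|\mathbf{i}|(2g-1)$ such that $$\Lambda_s(\mathbf{f}-\mathbf{R})^{\mathbf{i}}=G^{|\mathbf{i}|}\,\Omega_{s,\mathbf{i}}.$$
   Context: Let $q$ be a prime power. The Hermitian curve over $\mathbb{F}_{q^2}$ is the smooth projective plane curve with affine equation $Y^q+Y=X^{q+1}$; it has genus $g=\tfrac12 q(q-1)$, $n=q^3$ affine rational points $P_1,\dots,P_n$ and the point at infinity $P_\infty$. Let $\mathcal{R}=\bigcup_{m\ge0}\mathcal{L}(mP_\infty)=\mathbb{F}_{q^2}[X,Y]/(Y^q+Y-X^{q+1})$ with basis $\{X^iY^j: i\ge0,0\le j<q\}$; $\deg_{\mathcal{H}} f=-v_{P_\infty}(f)$ ($v_P$ the valuation at $P$), so $\deg_{\mathcal{H}}(X^iY^j)=iq+j(q+1)$; $f\neq 0$ is monic if the coefficient of its basis monomial of largest $\deg_{\mathcal{H}}$ is $1$. Fix integers $h\ge1$ and $m_{\mathrm H}$ with $2(g-1)<m_{\mathrm H}<n$. Let $\mathbf{f}=(f_1,\dots,f_h)\in\mathcal{L}(m_{\mathrm H}P_\infty)^h$ and let $\mathbf{r}=\mathbf{c}+\mathbf{e}\in\mathbb{F}_{q^2}^{h\times n}$, where $\mathbf{c}$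 has $i$-th row $(f_i(P_1),\dots,f_i(P_n))$, and let $\mathcal{E}\subseteq\{1,\dots,n\}$ be the set of indices of nonzero columns of $\mathbf{e}$. Let $\Lambda_s$ be the unique monic element of minimal $\deg_{\mathcal{H}}$ of $\{\Lambda\in\mathcal{R}: v_{P_i}(\Lambda)\ge s\ \forall i\in\mathcal{E}\}$. Let $\mathbf{R}=(R_1,\dots,R_h)\in\mathcal{R}^h$ with $\deg_{\mathcal{H}}R_i<n+2g$ and $R_i(P_j)=r_{i,j}$ for all $i,j$. Let $G=\prod_{\alpha\in\mathbb{F}_{q^2}}(X-\alpha)=X^{q^2}-X$. For $\mathbf{i}\in\mathbb{Z}_{\ge0}^h$: $|\mathbf{i}|=\sum_\mu i_\mu$, and for $\mathbf{a}\in\mathcal{R}^h$, $\mathbf{a}^{\mathbf{i}}=\prod_\mu a_\mu^{i_\mu}$. *)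

(* Defs.v *)
From HB Require Import structures.
From mathcomp Require Import all_boot all_order all_algebra.
Set Implicit Arguments. Unset Strict Implicit. Unset Printing Implicit Defensive.
Import Order.TTheory GRing.Theory Num.Theory.
Local Open Scope ring_scope.

(* Elements of R = F[X,Y]/(Y^q+Y-X^(q+1)) are represented by bivariate
   polynomials p : {poly {poly F}}: the OUTER variable is Y, the coefficients
   are polynomials in X. *)

Section Hermitian.
Variables (F : finFieldType) (q : nat).

Definition hX : {poly {poly F}} := ('X)%:P.
Definition hY : {poly {poly F}} := 'X.
Definition hH : {poly {poly F}} := hY ^+ q + hY - hX ^+ q.+1.

Definition hred (p : {poly {poly F}}) : {poly {poly F}} := p %% hH.

Definition eqH (p1 p2 : {poly {poly F}}) : Prop := hred (p1 - p2) = 0.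

Definition hcoef (p : {poly {poly F}}) (j : nat) : {poly F} := (hred p)`_j.

(* deg_H, with the convention deg_H 0 = 0 *)
Definition degH (p : {poly {poly F}}) : nat :=
  \max_(j < size (hred p))
    \max_(i < size (hcoef p j) | ((hcoef p j)`_i != 0)%R) (i * q + j * q.+1)%N.

Definition monicH (p : {poly {poly F}}) : Prop :=
  hred p != 0 /\
  forall i j : nat, (hcoef p j)`_i != 0 -> (i * q + j * q.+1)%N = degH p ->
    (hcoef p j)`_i = 1.

Definition hev (p : {poly {poly F}}) (a b : F) : F := (p.[b%:P]).[a].

Definition hpred : pred (F * F) :=
  fun ab => ab.2 ^+ q + ab.2 == ab.1 ^+ q.+1.
Definition hpoint := {ab : F * F | hpred ab}.

Definition hevP (p : {poly {poly F}}) (P : hpoint) : F :=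
  hev p (val P).1 (val P).2.

(* v_P(p) >= s, i.e. p lies in m_P^s O_P, where O_P is the local ring of R
   at P = (a,b) and m_P = (X - a, Y - b):  there is u in R with u(P) <> 0 and
   u p in the ideal m_P^s of R (generated by (X-a)^k (Y-b)^(s-k)). *)
Definition vge (p : {poly {poly F}}) (P : hpoint) (s : nat) : Prop :=
  let a := (val P).1 in let b := (val P).2 in
  exists (u d : {poly {poly F}}) (c : 'I_s.+1 -> {poly {poly F}}),
    hevP u P != 0 /\
    u * p = \sum_(k < s.+1) c k * (hX - (a%:P)%:P) ^+ k * (hY - (b%:P)%:P) ^+ (s - k)
            + d * hH.

(* G = prod_{alpha in F} (X - alpha) = X^(q^2) - X *)
Definition hG : {poly {poly F}} := hX ^+ (q ^ 2)%N - hX.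

End Hermitian.

Definition genus (q : nat) : nat := (q * (q - 1)) %/ 2.

(* Main.v *)
Require Import Defs.
From HB Require Import structures.
From mathcomp Require Import all_boot all_order all_algebra all_fingroup all_field.
From mathcomp Require Import ring lra zify.
From Stdlib Require Import Lia.
Import GRing.Theory.
Local Open Scope ring_scope.
Set Warnings "-notation-overridden,-ambiguous-paths".
Set Implicit Arguments. Unset Strict Implicit. Unset Printing Implicit Defensive.

Section Basic.
Variables (F : finFieldType) (q : nat).
Hypothesis hq : (1 < q)%N.
Local Notation P := {poly {poly F}}.
Local Notation H := (hH F q).

Lemma hH_E : H = 'X^q + ('X - ((('X : {poly F}) ^+ q.+1)%:P)).
Proof. by rewrite /hH /hY /hX rmorphXn addrA. Qed.

Lemma size_hH : size H = q.+1.
Proof.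
by rewrite hH_E size_polyDl size_polyXn // size_XsubC.
Qed.

Lemma monic_hH : H \is monic.
Proof.
by apply/monicP; rewrite hH_E lead_coefDl ?lead_coefXn // size_polyXn size_XsubC.
Qed.

Lemma ulcH : lead_coef H \is a GRing.unit.
Proof. by rewrite (eqP monic_hH) unitr1. Qed.

Lemma hredD (a b : P) : hred q (a + b) = hred q a + hred q b.
Proof. exact: (Pdiv.IdomainUnit.modpD ulcH). Qed.
Lemma hredN (a : P) : hred q (- a) = - hred q a.
Proof. exact: (Pdiv.IdomainUnit.modpN ulcH). Qed.
Lemma hredB (a b : P) : hred q (a - b) = hred q a - hred q b.
Proof. by rewrite hredD hredN. Qed.
Lemma hredC (c : {poly F}) (a : P) : hred q (c%:P * a) = c%:P * hred q a.
Proof. by rewrite !mul_polyC; exact: (Pdiv.IdomainUnit.modpZl ulcH). Qed.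
Lemma hred_eq (a : P) : a = (a %/ H) * H + hred q a.
Proof. exact: (Pdiv.IdomainUnit.divp_eq ulcH). Qed.
Lemma size_hred (a : P) : (size (hred q a) <= q)%N.
Proof. by rewrite -ltnS -size_hH ltn_modp -size_poly_eq0 size_hH. Qed.

Lemma eqHP (a b : P) : eqH q a b <-> exists d, a = b + d * H.
Proof.
rewrite /eqH; split.
  move=> h0; exists ((a - b) %/ H); have := hred_eq (a - b).
  by rewrite h0 addr0 => <-; rewrite addrC subrK.
by case=> d ->; rewrite addrC addKr /hred modp_mull.
Qed.

Lemma eqH_hred (a b : P) : eqH q a b -> hred q a = hred q b.
Proof. by rewrite /eqH hredB => /eqP; rewrite subr_eq0 => /eqP. Qed.

Lemma eqH_refl (a : P) : eqH q a a.
Proof. by apply/eqHP; exists 0; rewrite mul0r addr0. Qed.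
Lemma eqH_sym (a b : P) : eqH q a b -> eqH q b a.
Proof. by case/eqHP=> d ->; apply/eqHP; exists (-d); rewrite mulNr addrK. Qed.
Lemma eqH_trans (a b c : P) : eqH q a b -> eqH q b c -> eqH q a c.
Proof.
case/eqHP=> d ->; case/eqHP=> d' ->; apply/eqHP; exists (d' + d).
by rewrite mulrDl addrA.
Qed.
Lemma eqH_add (a b a' b' : P) : eqH q a a' -> eqH q b b' -> eqH q (a + b) (a' + b').
Proof.
case/eqHP=> d ->; case/eqHP=> d' ->; apply/eqHP; exists (d + d').
by rewrite mulrDl; rewrite addrACA.
Qed.
Lemma eqH_opp (a a' : P) : eqH q a a' -> eqH q (- a) (- a').
Proof. by case/eqHP=> d ->; apply/eqHP; exists (-d); rewrite opprD mulNr. Qed.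
Lemma eqH_mul (a b a' b' : P) : eqH q a a' -> eqH q b b' -> eqH q (a * b) (a' * b').
Proof.
case/eqHP=> d ->; case/eqHP=> d' ->; apply/eqHP.
exists (a' * d' + d * b' + d * d' * H).
ring.
Qed.
Lemma eqH_exp (a a' : P) n : eqH q a a' -> eqH q (a ^+ n) (a' ^+ n).
Proof.
move=> h; elim: n => [|n IH]; first exact: eqH_refl.
by rewrite !exprS; apply: eqH_mul.
Qed.
Lemma eqH_red (a : P) : eqH q a (hred q a).
Proof. by apply/eqHP; exists (a %/ H); rewrite addrC -hred_eq. Qed.

Lemma eqH_cancel (c : {poly F}) (a b : P) : c != 0 -> eqH q (c%:P * a) (c%:P * b) -> eqH q a b.
Proof.
move=> c0; rewrite /eqH -mulrBr hredC => /eqP; rewrite mulf_eq0 polyC_eq0.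
by rewrite (negPf c0) => /eqP.
Qed.

End Basic.
Section Val.
Variables (F : finFieldType) (q : nat).
Hypothesis hq : (1 < q)%N.
Hypothesis hq0 : (q%:R : F) = 0.
Local Notation P := {poly {poly F}}.
Local Notation H := (hH F q).
Local Notation pt := (hpoint F q).
Implicit Types (Q : pt).

Definition CC (c : F) : P := (c%:P)%:P.
Definition xP (Q : pt) : P := hX F - CC (val Q).1.
Definition yP (Q : pt) : P := hY F - CC (val Q).2.

Lemma hevD (a b : P) Q : hevP (a + b) Q = hevP a Q + hevP b Q.
Proof. by rewrite /hevP /hev !hornerE. Qed.
Lemma hevN (a : P) Q : hevP (- a) Q = - hevP a Q.
Proof. by rewrite /hevP /hev !hornerE. Qed.
Lemma hevB (a b : P) Q : hevP (a - b) Q = hevP a Q - hevP b Q.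
Proof. by rewrite hevD hevN. Qed.
Lemma hevM (a b : P) Q : hevP (a * b) Q = hevP a Q * hevP b Q.
Proof. by rewrite /hevP /hev !hornerE. Qed.
Lemma hevX (a : P) n Q : hevP (a ^+ n) Q = hevP a Q ^+ n.
Proof. by rewrite /hevP /hev !hornerE. Qed.
Lemma hevCC c Q : hevP (CC c) Q = c.
Proof. by rewrite /hevP /hev /CC !hornerE. Qed.
Lemma hev0 Q : hevP 0 Q = 0.
Proof. by rewrite /hevP /hev !hornerE. Qed.
Lemma hev_sum I (r : seq I) (Pr : pred I) (f : I -> P) Q :
  hevP (\sum_(i <- r | Pr i) f i) Q = \sum_(i <- r | Pr i) hevP (f i) Q.
Proof. exact: (big_morph _ (fun a b => hevD a b Q) (hev0 Q)). Qed.
Lemma hev1 Q : hevP 1 Q = 1.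
Proof. by rewrite /hevP /hev !hornerE. Qed.
Lemma hevX_ Q : hevP (hX F) Q = (val Q).1.
Proof. by rewrite /hevP /hev /hX !hornerE. Qed.
Lemma hevY_ Q : hevP (hY F) Q = (val Q).2.
Proof. by rewrite /hevP /hev /hY !hornerE. Qed.
Lemma hevH Q : hevP H Q = 0.
Proof.
rewrite /hH hevB hevD !hevX hevX_ hevY_.
by case: Q => [[a b] /= /eqP ->]; rewrite subrr.
Qed.
Lemma hev_eqH (a b : P) Q : eqH q a b -> hevP a Q = hevP b Q.
Proof. by case/(eqHP hq)=> d ->; rewrite hevD hevM hevH mulr0 addr0. Qed.
Lemma hev_xP Q : hevP (xP Q) Q = 0.
Proof. by rewrite /xP hevB hevX_ hevCC subrr. Qed.
Lemma hev_yP Q : hevP (yP Q) Q = 0.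
Proof. by rewrite /yP hevB hevY_ hevCC subrr. Qed.

Fixpoint inI (x y : P) (k : nat) (z : P) : Prop :=
  match k with
  | 0 => True
  | k'.+1 => exists z1 z2, [/\ inI x y k' z1, inI x y k' z2 & z = x * z1 + y * z2]
  end.

Section InI.
Variables x y : P.
Lemma inI_0 k : inI x y k 0.
Proof. by elim: k => //= k IH; exists 0, 0; rewrite !mulr0 addr0. Qed.
Lemma inI_add k a b : inI x y k a -> inI x y k b -> inI x y k (a + b).
Proof.
elim: k a b => //= k IH a b [a1 [a2 [h1 h2 ->]]] [b1 [b2 [h3 h4 ->]]].
exists (a1 + b1), (a2 + b2); split; try exact: IH.
by rewrite !mulrDr addrACA.
Qed.
Lemma inI_mul k w a : inI x y k a -> inI x y k (w * a).
Proof.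
elim: k w a => //= k IH w a [a1 [a2 [h1 h2 ->]]].
exists (w * a1), (w * a2); split; try exact: IH.
by rewrite mulrDr !mulrA ![w * _]mulrC.
Qed.
Lemma inI_S k a : inI x y k.+1 a -> inI x y k a.
Proof.
elim: k a => //= k IH a [a1 [a2 [h1 h2 ->]]].
by exists a1, a2; split; try exact: IH.
Qed.
Lemma inI_le k m a : (m <= k)%N -> inI x y k a -> inI x y m a.
Proof.
move=> /subnK <-; elim: (k - m)%N a => //= n IH a h.
by apply: IH; apply: inI_S; exact: h.
Qed.
Lemma inI_mon k j : (j <= k)%N -> inI x y k (x ^+ j * y ^+ (k - j)).
Proof.
elim: k j => [|k IH] [|j] //= hj.
  exists 0, (y ^+ k); split; first exact: inI_0.
    by move: (IH 0%N (leq0n _)); rewrite expr0 mul1r subn0.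
  by rewrite mulr0 add0r subn0 exprS expr0 mul1r.
exists (x ^+ j * y ^+ (k - j)), 0; split; first exact: IH.
  exact: inI_0.
by rewrite subSS mulr0 addr0 exprS mulrA.
Qed.
Lemma inI_prod a b z w : inI x y a z -> inI x y b w -> inI x y (a + b) (z * w).
Proof.
elim: a z => [|a IH] z.
  by move=> _ hw; rewrite add0n; apply: inI_mul.
rewrite addSn => -[z1 [z2 [h1 h2 ->]]] hw; exists (z1 * w), (z2 * w); split; try exact: IH.
by rewrite mulrDl !mulrA.
Qed.
End InI.

Lemma inI_ev Q k z : inI (xP Q) (yP Q) k.+1 z -> hevP z Q = 0.
Proof.
by move=> [z1 [z2 [_ _ ->]]]; rewrite hevD !hevM hev_xP hev_yP !mul0r addr0.
Qed.

Definition V (p : P) (Q : pt) (k : nat) : Prop :=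
  exists u, hevP u Q != 0 /\ exists z, inI (xP Q) (yP Q) k z /\ eqH q (u * p) z.

Lemma vge_V p Q s : vge p Q s -> V p Q s.
Proof.
case=> [u [d [c [hu e]]]]; exists u; split => //.
exists (\sum_(k < s.+1) c k * xP Q ^+ k * yP Q ^+ (s - k)); split.
  apply: (big_ind (inI (xP Q) (yP Q) s)); first exact: inI_0.
    by move=> ? ?; apply: inI_add.
  by move=> i _; rewrite -mulrA; apply: inI_mul; apply: inI_mon; rewrite -ltnS.
by apply/(eqHP hq); exists d; rewrite e.
Qed.

Lemma V_le p Q k m : (m <= k)%N -> V p Q k -> V p Q m.
Proof.
move=> hm [u [hu [z [hz e]]]]; exists u; split => //; exists z; split => //.
exact: inI_le hz.
Qed.

Lemma V_mul p p' Q k k' : V p Q k -> V p' Q k' -> V (p * p') Q (k + k').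
Proof.
move=> [u [hu [z [hz e]]]] [u' [hu' [z' [hz' e']]]].
exists (u * u'); split; first by rewrite hevM mulf_neq0.
exists (z * z'); split; first exact: inI_prod.
have -> : u * u' * (p * p') = (u * p) * (u' * p') by ring.
exact: (eqH_mul hq).
Qed.

Lemma V_0 p Q : V p Q 0.
Proof.
exists 1; split; first by rewrite hev1 oner_neq0.
by exists (1 * p); split => //; apply: (eqH_refl hq).
Qed.

Lemma V_mulw w p Q k : V p Q k -> V (w * p) Q k.
Proof. by move=> h; rewrite -[k]add0n; apply: V_mul h; apply: V_0. Qed.

Lemma V_eqH p p' Q k : eqH q p p' -> V p Q k -> V p' Q k.
Proof.
move=> hp [u [hu [z [hz e]]]]; exists u; split => //; exists z; split => //.
apply: (eqH_trans hq) e; apply: (eqH_mul hq); [exact: (eqH_refl hq) | exact: (eqH_sym hq)].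
Qed.

Lemma V_ev p Q k : V p Q k.+1 -> hevP p Q = 0.
Proof.
move=> [u [hu [z [hz e]]]]; have := hev_eqH Q e; rewrite (inI_ev hz) hevM.
by move/eqP; rewrite mulf_eq0 (negPf hu) => /eqP.
Qed.

Lemma V_unit w p Q k : hevP w Q != 0 -> V (w * p) Q k -> V p Q k.
Proof.
move=> hw [u [hu [z [hz e]]]]; exists (u * w); split; first by rewrite hevM mulf_neq0.
by exists z; split => //; rewrite -mulrA.
Qed.

End Val.
Section Div.
Variables (F : finFieldType) (q : nat).
Hypothesis hq : (1 < q)%N.
Hypothesis hq0 : (q%:R : F) = 0.
Local Notation P := {poly {poly F}}.
Local Notation H := (hH F q).
Local Notation pt := (hpoint F q).
Implicit Types (Q : pt).

Lemma xP_C Q : xP Q = ('X - ((val Q).1)%:P)%:P.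
Proof. by rewrite /xP /hX /CC rmorphB. Qed.

Lemma V_root z Q : hevP z Q = 0 -> V z Q 1.
Proof.
move=> hz; set a := (val Q).1; set b := (val Q).2.
set c := z.[b%:P].
have /factor_theorem [w2 e2] : root (z - c%:P) (b%:P).
  by rewrite /root !hornerE subrr.
have /factor_theorem [w1 e1] : root c a.
  by apply/eqP; exact: hz.
exists 1; split; first by rewrite hev1 oner_neq0.
exists z; split; last by rewrite mul1r; apply: eqH_refl.
exists (w1%:P), w2; split => //.
rewrite xP_C /yP /hY /CC -/b -/a mulrC -rmorphM -e1 mulrC -e2.
by rewrite addrC subrK.
Qed.

Section AB.
Variable Q : pt.
Let a := (val Q).1.
Let b := (val Q).2.
Definition hA : P := \sum_(i < q) hY F ^+ (q.-1 - i) * CC b ^+ i + 1.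
Definition hB : P := \sum_(i < q.+1) hX F ^+ (q - i) * CC a ^+ i.

Lemma yA_eq : yP Q * hA = xP Q * hB + H.
Proof.
have hb : b ^+ q + b - a ^+ q.+1 = 0.
  by rewrite /a /b; case: Q => [[a0 b0] /= /eqP ->]; rewrite subrr.
rewrite /hA mulrDr mulr1 /yP /xP /hB -subrXX -subrXX /hH -/a -/b.
have : CC b ^+ q + CC b - CC a ^+ q.+1 = 0.
  by rewrite /CC -!polyC_exp -!polyCD -!polyCB hb.
rewrite /CC; move: ((b%:P)%:P : P) ((a%:P)%:P : P) (hY F) (hX F) => B0 A0 Y0 X0 e.
apply/eqP; rewrite -subr_eq0; apply/eqP.
transitivity (-(B0 ^+ q + B0 - A0 ^+ q.+1)); first ring.
by rewrite e oppr0.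
Qed.

Lemma hev_hA : hevP hA Q = 1.
Proof.
rewrite /hA hevD hev1 hev_sum.
have -> : \sum_(i < q) hevP (hY F ^+ (q.-1 - i) * CC b ^+ i) Q
          = \sum_(i < q) b ^+ q.-1.
  apply: eq_bigr => i _; rewrite hevM !hevX hevY_ hevCC -exprD subnK //.
  by rewrite -ltnS prednK ?(ltn_ord i) // (ltn_trans _ hq).
by rewrite sumr_const card_ord -mulr_natr hq0 mulr0 add0r.
Qed.

Lemma Aind k z : inI (xP Q) (yP Q) k z ->
  exists W, eqH q (hA ^+ k * z) (xP Q ^+ k * W).
Proof.
elim: k z => [|k IH] z /=.
  by move=> _; exists z; apply: eqH_refl.
move=> [z1 [z2 [h1 h2 ->]]].
have [W1 /(eqHP hq) [d1 e1]] := IH _ h1.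
have [W2 /(eqHP hq) [d2 e2]] := IH _ h2.
exists (hA * W1 + hB * W2); apply/(eqHP hq).
exists (xP Q * hA * d1 + (xP Q * hB + H) * d2 + xP Q ^+ k * W2).
have -> : hA ^+ k.+1 * (xP Q * z1 + yP Q * z2)
   = xP Q * hA * (hA ^+ k * z1) + (yP Q * hA) * (hA ^+ k * z2).
  by rewrite exprS; ring.
rewrite e1 e2 yA_eq exprS; ring.
Qed.
End AB.

Lemma V_divx w Q k : V (xP Q * w) Q k.+1 -> V w Q k.
Proof.
move=> [u [hu [z [hz e]]]].
have [W eW] := Aind hz.
exists (hA Q ^+ k.+1 * u); split.
  by rewrite hevM hevX hev_hA expr1n mul1r.
exists (xP Q ^+ k * W); split.
  rewrite mulrC; apply: inI_mul.
  by have := inI_mon (xP Q) (yP Q) (leqnn k); rewrite subnn expr0 mulr1.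
have h1 : eqH q (hA Q ^+ k.+1 * (u * (xP Q * w))) (xP Q ^+ k.+1 * W).
  apply: (eqH_trans hq) eW; apply: (eqH_mul hq); [exact: eqH_refl | exact: e].
have h2 : eqH q (('X - ((val Q).1)%:P)%:P * (hA Q ^+ k.+1 * u * w))
                (('X - ((val Q).1)%:P)%:P * (xP Q ^+ k * W)).
  rewrite -xP_C; move: h1; congr eqH; [ring | rewrite exprS; ring].
apply: (eqH_cancel hq) h2; by rewrite polyXsubC_eq0.
Qed.

End Div.
Section Count.
Variables (F : finFieldType) (q : nat).
Hypothesis hq : (1 < q)%N.
Hypothesis hq0 : (q%:R : F) = 0.
Hypothesis hcard : #|F| = (q ^ 2)%N.
Hypothesis hfrob : forall x y : F, (x + y) ^+ q = x ^+ q + y ^+ q.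
Local Notation P := {poly {poly F}}.
Local Notation H := (hH F q).
Local Notation pt := (hpoint F q).
Implicit Types (Q : pt).

Lemma frobN (x : F) : (- x) ^+ q = - x ^+ q.
Proof.
have : (x + - x) ^+ q = 0 by rewrite subrr expr0n; case: q hq.
by rewrite hfrob => h; rewrite -[RHS]addr0 -h addKr.
Qed.

Lemma fixq (x : F) : (x ^+ q) ^+ q = x.
Proof. by rewrite -exprM mulnn -hcard expf_card. Qed.

Lemma count_roots (al : F) :
  (q <= #|[set y : F | (y ^+ q + y == al ^+ q.+1)%R]|)%N.
Proof.
set c := al ^+ q.+1.
have cq : c ^+ q = c.
  by rewrite /c -exprM mulSn exprD mulnn -hcard expf_card mulrC -exprS.
have q0 : (0 < q)%N by apply: ltn_trans hq.
pose T : {poly F} := 'X^q + 'X - c%:P.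
have Tx : forall x, T.[x] = x ^+ q + x - c by move=> x; rewrite /T !hornerE.
have sT : size T = q.+1 by rewrite /T -addrA size_polyDl size_polyXn // size_XsubC.
have mT : T \is monic.
  by apply/monicP; rewrite /T -addrA lead_coefDl ?lead_coefXn // size_polyXn size_XsubC.
clearbody T.
pose S := T ^+ q.-1 - 1.
have hTS : forall x, T.[x] * S.[x] = 0.
  move=> x; rewrite /S hornerD hornerN horner_exp hornerC.
  have tq : T.[x] ^+ q = T.[x].
    rewrite Tx !hfrob frobN fixq cq.
    by rewrite [x ^+ q + x]addrC.
  by rewrite mulrBr mulr1 -exprS prednK // tq subrr.
have sTn : size (T ^+ q.-1) = (q * q.-1).+1.
  have := size_exp T q.-1; rewrite sT /= => <-.
  by rewrite prednK // lt0n size_poly_eq0 monic_neq0 // monic_exp.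
have q1 : (1 <= q * q.-1)%N by rewrite muln_gt0 q0 -ltnS prednK.
have sS : size S = (q * q.-1).+1.
  by rewrite /S size_polyDl sTn // size_polyN size_polyC oner_neq0 ltnS.
pose A := [set y | T.[y] == 0]; pose B := [set y | S.[y] == 0].
have hB : (#|B| < size S)%N.
  rewrite cardE; apply: max_poly_roots; last exact: enum_uniq.
    by rewrite -size_poly_eq0 sS.
  by apply/allP => y; rewrite mem_enum inE.
have hU : (#|F| <= #|A| + #|B|)%N.
  have -> : #|F| = #|A :|: B|.
    apply: eq_card => y; rewrite !inE; apply/esym.
    by have := hTS y; move/eqP; rewrite mulf_eq0.
  by rewrite cardsU leq_subr.
have -> : [set y : F | (y ^+ q + y == al ^+ q.+1)%R] = A.
  by apply/setP => y; rewrite !inE Tx subr_eq0.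
move: hU hB; rewrite hcard sS ltnS -mulnn.
have -> : (q * q = q + q * q.-1)%N by rewrite addnC -mulnSr prednK.
lia.
Qed.


Lemma hG_C : hG F q = ('X^(q ^ 2) - 'X : {poly F})%:P.
Proof. by rewrite /hG /hX polyCB polyC_exp. Qed.

Lemma genG : ('X^(q ^ 2) - 'X : {poly F}) = \prod_x ('X - x%:P).
Proof. by rewrite -hcard finField_genPoly. Qed.

Lemma Zdiv (p : P) : (forall Q, hevP p Q = 0) -> exists p1, eqH q p (hG F q * p1).
Proof.
move=> hp; set r := hred q p.
have epr : eqH q p r := eqH_red hq p.
have hr : forall Q, hevP r Q = 0 by move=> Q; rewrite -(hev_eqH hq Q epr) hp.
have coef0 : forall (al : F) j, (r`_j).[al] = 0.
  move=> al j.
  pose ra := map_poly (horner_eval al) r.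
  have ra0 : ra = 0.
    apply/eqP; apply: contraT => nz.
    set A := [set y : F | (y ^+ q + y == al ^+ q.+1)%R].
    have hsz : (size ra <= q)%N.
      apply/leq_sizeP => j0 hj; rewrite coef_map /= nth_default.
        exact: horner0.
      exact: leq_trans (size_hred hq p) hj.
    have hall : all (root ra) (enum A).
      apply/allP => y; rewrite mem_enum inE => hy.
      pose Qy : pt := exist _ (al, y) hy.
      have := hr Qy; rewrite /hevP /hev /= => h.
      have := horner_map (horner_eval al) r (y%:P).
      by rewrite /root /ra /= !horner_evalE hornerC => ->; rewrite h.
    have := max_poly_roots nz hall (enum_uniq _).
    rewrite -cardE => h1; have h2 : (q <= #|A|)%N by exact: count_roots al.
    by have := leq_ltn_trans h2 (leq_trans h1 hsz); rewrite ltnn.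
  by move: (congr1 (fun s : {poly F} => s`_j) ra0); rewrite coef_map coef0.
pose g : {poly F} := 'X^(q ^ 2) - 'X.
have gdiv : forall j, g %| r`_j.
  move=> j; rewrite /g genG -big_enum /=.
  apply: uniq_roots_dvdp; last by rewrite uniq_rootsE enum_uniq.
  by apply/allP => x _; rewrite /root coef0.
exists (\poly_(j < size r) (r`_j %/ g)).
apply: (eqH_trans hq epr).
have -> : hG F q * \poly_(j < size r) (r`_j %/ g) = r.
  rewrite hG_C; apply/polyP => j; rewrite coefCM coef_poly.
  case: ltnP => hj; first by rewrite mulrC divpK.
  by rewrite mulr0 nth_default.
exact: eqH_refl.
Qed.

Definition Ga Q : P := (\prod_(x | x != (val Q).1) ('X - x%:P))%:P.

Lemma hG_split Q : hG F q = xP Q * Ga Q.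
Proof. by rewrite hG_C genG (bigD1 ((val Q).1)) //= polyCM xP_C. Qed.

Lemma hevGa Q : hevP (Ga Q) Q != 0.
Proof.
rewrite /hevP /hev /Ga hornerC horner_prod; apply/prodf_neq0 => x hx.
by rewrite !hornerE subr_eq0 eq_sym.
Qed.

Lemma Gdiv k (p : P) : (forall Q, V p Q k) -> exists Om, eqH q p (hG F q ^+ k * Om).
Proof.
elim: k p => [|k IH] p hV.
  by exists p; rewrite expr0 mul1r; exact: eqH_refl.
have hp0 : forall Q, hevP p Q = 0.
  by move=> Q; have := hV Q; move/(V_ev hq).
have [p1 e1] := Zdiv hp0.
have hV1 : forall Q, V p1 Q k.
  move=> Q; have := V_eqH hq e1 (hV Q).
  rewrite (hG_split Q) -mulrA => /(V_divx hq hq0).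
  exact: V_unit (hevGa Q).
have [Om eOm] := IH p1 hV1.
exists Om; apply: (eqH_trans hq e1); rewrite exprS -mulrA.
by apply: (eqH_mul hq) eOm; exact: eqH_refl.
Qed.

End Count.
Lemma coef_nz_lt (R : nzRingType) (p : {poly R}) i : p`_i != 0 -> (i < size p)%N.
Proof. by apply: contraR; rewrite -leqNgt => h; rewrite nth_default. Qed.

Lemma sum_nz (R : nzRingType) n (f : 'I_n -> R) :
  \sum_(l < n) f l != 0 -> exists l, f l != 0.
Proof.
move=> nz; have /existsP [l hl] : [exists l, f l != 0]; last by exists l.
apply: contraNT nz => /existsPn h; apply/eqP; rewrite big1 // => l _.
by apply/eqP; have := h l; rewrite negbK.
Qed.

Section Deg.
Variables (F : finFieldType) (q : nat).
Hypothesis hq : (1 < q)%N.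
Local Notation P := {poly {poly F}}.
Local Notation H := (hH F q).

Definition wle (p : P) (n : nat) :=
  forall j i, ((p`_j)`_i != 0) -> (i * q + j * q.+1 <= n)%N.

Lemma degH_wle (p : P) n : (degH q p <= n)%N <-> wle (hred q p) n.
Proof.
rewrite /degH /hcoef; split.
  move=> h j i nz.
  have hj : (j < size (hred q p))%N.
    by apply: coef_nz_lt; apply: contraNneq nz => ->; rewrite coef0.
  have hi := coef_nz_lt nz.
  apply: leq_trans h.
  apply: leq_trans (leq_bigmax (Ordinal hj)); rewrite /=.
  exact: (leq_bigmax_cond (Ordinal hi) nz).
move=> h; apply/bigmax_leqP => j _; apply/bigmax_leqP => i nz; exact: h.
Qed.

Lemma wle_le (p : P) m n : wle p m -> (m <= n)%N -> wle p n.
Proof. by move=> h hmn j i nz; apply: leq_trans hmn; apply: h. Qed.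

Lemma wle0 n : wle 0 n.
Proof. by move=> j i; rewrite !coef0 eqxx. Qed.

Lemma wle_add (a b : P) n : wle a n -> wle b n -> wle (a + b) n.
Proof.
move=> ha hb j i; rewrite !coefD.
have [/ha //|z1] := boolP ((a`_j)`_i != 0).
by rewrite negbK in z1; rewrite (eqP z1) add0r; apply: hb.
Qed.

Lemma wle_opp (a : P) n : wle a n -> wle (- a) n.
Proof. by move=> ha j i; rewrite !coefN oppr_eq0; apply: ha. Qed.

Lemma wle_mul (a b : P) m n : wle a m -> wle b n -> wle (a * b) (m + n).
Proof.
move=> ha hb j i; rewrite coefM coef_sum => /sum_nz [l].
rewrite coefM => /sum_nz [t]; rewrite mulf_eq0 negb_or => /andP [n1 n2].
have h1 := ha _ _ n1; have h2 := hb _ _ n2.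
have lj : (l <= j)%N by rewrite -ltnS ltn_ord.
have ti : (t <= i)%N by rewrite -ltnS ltn_ord.
have e1 : (i * q = t * q + (i - t) * q)%N by rewrite -mulnDl subnKC.
have e2 : (j * q.+1 = l * q.+1 + (j - l) * q.+1)%N by rewrite -mulnDl subnKC.
rewrite e1 e2; move: h1 h2; move: (t * q)%N ((i - t) * q)%N (l * q.+1)%N ((j - l) * q.+1)%N.
move=> *; lia.
Qed.

Lemma wle1 : wle 1 0.
Proof.
move=> j i; rewrite coef1; have [->|nj] := eqVneq j 0; last by rewrite /= coef0 eqxx.
rewrite /= coef1; have [->|ni] := eqVneq i 0; first by [].
by rewrite /= eqxx.
Qed.

Lemma wle_exp (a : P) m k : wle a m -> wle (a ^+ k) (k * m).
Proof.
move=> ha; elim: k => [|k IH]; first by rewrite expr0 mul0n; exact: wle1.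
by rewrite exprS mulSn; apply: wle_mul.
Qed.

Lemma wle_prod h (z : 'I_h -> P) (ii : 'I_h -> nat) D :
  (forall mu, wle (z mu) D) ->
  wle (\prod_(mu < h) z mu ^+ ii mu) ((\sum_(mu < h) ii mu) * D).
Proof.
move=> hz; rewrite big_distrl /=.
apply: (big_rec2 (fun n p => wle p n)); first exact: wle1.
by move=> mu y1 y2 _ hy; apply: wle_mul => //; apply: wle_exp.
Qed.

Lemma wle_polyC (c : {poly F}) : wle (c%:P) ((size c).-1 * q).
Proof.
move=> j i; rewrite coefC; have [->|nj] := eqVneq j 0; last by rewrite coef0 eqxx.
move/coef_nz_lt => hi; rewrite mul0n addn0 leq_mul2r; apply/orP; right.
by rewrite -ltnS (leq_trans hi) // leqSpred.
Qed.

Lemma wle_Xn k : wle ('X^k) (k * q.+1).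
Proof.
move=> j i; rewrite coefXn; have [->|nj] := eqVneq j k; last by rewrite /= coef0 eqxx.
rewrite /= coef1; have [->|ni] := eqVneq i 0; first by rewrite mul0n.
by rewrite /= eqxx.
Qed.

Lemma wle_hX : wle (hX F) q.
Proof.
move=> j i; rewrite /hX coefC; have [->|nj] := eqVneq j 0; last by rewrite coef0 eqxx.
rewrite coefX; have [->|ni] := eqVneq i 1; first by rewrite mul1n mul0n addn0.
by rewrite /= eqxx.
Qed.

Lemma wle_Cmul (c : {poly F}) (r : P) N : c != 0 -> wle (c%:P * r) N ->
  forall j i, ((r`_j)`_i != 0) -> ((size c).-1 * q + (i * q + j * q.+1) <= N)%N.
Proof.
move=> c0 h j i nz.
have d0 : r`_j != 0 by apply: contraNneq nz => ->; rewrite coef0.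
have := h j (addn (size c).-1 (size r`_j).-1).
move: nz d0; rewrite coefCM; set d := r`_j => nz d0.
have hi : (i <= (size d).-1)%N by move: (coef_nz_lt nz); case: (size _).
have hsz : addn (size c).-1 (size d).-1 = (size (c * d)).-1.
  rewrite size_mul //; move: c0 d0; rewrite -!size_poly_eq0.
  by case: (size c) => // a; case: (size d) => // b _ _; rewrite addSn addnS.
rewrite hsz -lead_coefE lead_coefM mulf_neq0 ?lead_coef_eq0 // => /(_ isT).
rewrite -hsz mulnDl => hb; apply: leq_trans hb.
have := leq_mul hi (leqnn q); move: ((size c).-1 * q)%N (i * q)%N ((size d).-1 * q)%N.
move=> *; lia.
Qed.


Lemma Zc t : (1 < t)%N -> (hX F ^+ q.+1 - 'X)`_t = 0.
Proof.
move=> ht; rewrite coefB coefX /hX -polyC_exp coefC.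
have -> : (t == 0) = false by case: t ht.
have -> : (t == 1) = false by case: t ht => // -[].
by rewrite subr0.
Qed.

Lemma wle_hred (p : P) n : wle p n -> wle (hred q p) n.
Proof.
move=> hp; move: {2}(size p) (leqnn (size p)) => m; elim: m p hp => [|m IH] p hp hs.
  move: hs; rewrite leqn0 size_poly_eq0 => /eqP ->; rewrite /hred mod0p; exact: wle0.
have [small|big] := leqP (size p) q.
  by rewrite /hred modp_small ?size_hH // ltnS.
set M := (size p).-1.
have hM : size p = M.+1 by rewrite /M prednK // (leq_ltn_trans (leq0n q) big).
have qM : (q <= M)%N by rewrite -ltnS -hM.
set lead := p`_M.
have l0 : lead != 0.
  rewrite /lead /M -lead_coefE lead_coef_eq0 -size_poly_eq0 hM //.
set p1 := p - lead%:P * 'X^M.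
set p2 := lead%:P * 'X^(M - q) * (hX F ^+ q.+1 - 'X).
have e : eqH q p (p1 + p2).
  apply/(eqHP hq); exists (lead%:P * 'X^(M-q)).
  rewrite /p1 /p2 /hH /hY.
  have -> : 'X^M = 'X^(M-q) * 'X^q :> P by rewrite -exprD subnK.
  ring.
rewrite (eqH_hred hq e); apply: IH.
  apply: wle_add.
    move=> j i; rewrite /p1 coefB coefCM coefXn; have [->|nj] := eqVneq j M.
      by rewrite /= mulr1 subrr coef0 eqxx.
    by rewrite /= mulr0 subr0; apply: hp.
  have hl : ((size lead).-1 * q + M * q.+1 <= n)%N.
    apply: hp; rewrite -lead_coefE lead_coef_eq0 //.
  have w3 : wle (hX F ^+ q.+1) (q.+1 * q) by apply: wle_exp => //; apply: wle_hX.
  have w4 : wle ('X : P) (q.+1 * q).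
    have := @wle_Xn 1; rewrite expr1 => h j i nz; apply: leq_trans (h j i nz) _.
    by rewrite mul1n leq_pmulr // (ltn_trans _ hq).
  have w5 : wle p2 ((size lead).-1 * q + (M - q) * q.+1 + q.+1 * q).
    rewrite /p2; apply: wle_mul => //; first by apply: wle_mul => //; [apply: wle_polyC | apply: wle_Xn].
    by apply: wle_add; [exact: w3 | apply: wle_opp; exact: w4].
  move=> j i nz; apply: leq_trans (w5 j i nz) _.
  apply: leq_trans hl; rewrite -addnA leq_add2l [(q.+1 * q)%N]mulnC -mulnDl subnK //.
suff hsz : (size (p1 + p2)%R <= M)%N by apply: leq_trans hsz _; move: hs; rewrite hM.
apply/leq_sizeP => j hj.
rewrite coefD /p1 /p2 coefB coefCM coefXn -mulrA coefCM coefXnM.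
have -> : ((if (j < M - q)%N then 0 else (hX F ^+ q.+1 - 'X)`_(j - (M - q))) = 0).
  case: ifP => // _; apply: Zc; lia.
rewrite mulr0 addr0; have [->|nj] := eqVneq j M; first by rewrite /= mulr1 subrr.
rewrite /= mulr0 subr0 nth_default // hM; by rewrite ltn_neqAle eq_sym nj hj.
Qed.

End Deg.
Lemma char_facts (F : finFieldType) (q : nat) : #|F| = (q ^ 2)%N -> (1 < q)%N ->
  (q%:R : F) = 0 /\ forall x y : F, (x + y) ^+ q = x ^+ q + y ^+ q.
Proof.
move=> hF hq.
have [p pr pc] := finPcharP F.
have pg := abelian.abelem_pgroup (abelian.fin_ring_pchar_abelem pc).
have pq : p.-nat q.
  move: pg; rewrite /pgroup.pgroup cardsT hF pnatX orbF //.
split.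
  2: move=> x y; rewrite exprDn_pchar //.
  2: by apply: sub_in_pnat pq => r _; rewrite inE /= => /eqP ->; exact: pc.
apply/eqP; rewrite -(dvdn_pcharf pc).
rewrite -(part_pnat_id pq) p_part dvdn_exp //.
rewrite lt0n; apply: contraTneq hq => h.
by rewrite -(part_pnat_id pq) p_part h.
Qed.

Unset Implicit Arguments.

Theorem lemma4 (F : finFieldType) (q : nat) (hF : #|F| = (q ^ 2)%N)
  (h : nat) (hh : (1 <= h)%N) (mH : nat)
  (hmH1 : (2 * genus q - 2 < mH)%N) (hmH2 : (mH < q ^ 3)%N)
  (f : 'I_h -> {poly {poly F}}) (hf : forall i, (degH q (f i) <= mH)%N)
  (e : 'I_h -> hpoint F q -> F)
  (s : nat) (hs : (0 < s)%N)
  (Lam : {poly {poly F}})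
  (hLam_mon : monicH q Lam)
  (hLam_in : forall P : hpoint F q, [exists i, e i P != 0] -> vge Lam P s)
  (hLam_min : forall L : {poly {poly F}}, ~ eqH q L 0 ->
     (forall P : hpoint F q, [exists i, e i P != 0] -> vge L P s) ->
     (degH q Lam <= degH q L)%N)
  (Rr : 'I_h -> {poly {poly F}})
  (hRdeg : forall i, (degH q (Rr i) < q ^ 3 + 2 * genus q)%N)
  (hRev : forall i (P : hpoint F q), hevP (Rr i) P = hevP (f i) P + e i P)
  (ii : 'I_h -> nat) (hii : (\sum_(mu < h) ii mu <= s)%N) :
  let k := (\sum_(mu < h) ii mu)%N in
  let bound := (degH q Lam + k * (2 * genus q - 1))%N in
  let lhs := Lam * \prod_(mu < h) (f mu - Rr mu) ^+ ii mu in
  exists Om : {poly {poly F}},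
    [/\ (degH q Om <= bound)%N,
        eqH q lhs (hG F q ^+ k * Om) &
        forall Om' : {poly {poly F}},
          (degH q Om' <= bound)%N -> eqH q lhs (hG F q ^+ k * Om') ->
          eqH q Om Om'].
Proof.
move=> k bound lhs.
have hq : (1 < q)%N.
  by have := finNzRing_gt1 F; rewrite hF; case: (q) => [|[|]].
have [hq0 hfrob] := char_facts hF hq.
have hV : forall Q : hpoint F q, V lhs Q k.
  move=> Q; have [hE|hE] := boolP [exists i, e i Q != 0].
    have := V_le hii (vge_V hq (hLam_in Q hE)).
    by rewrite /lhs mulrC; apply: V_mulw.
  apply: (V_mulw hq).
  have hz : forall mu, V (f mu - Rr mu) Q 1.
    move=> mu; apply: V_root => //; rewrite hevB hRev.
    move/existsPn: hE => /(_ mu); rewrite negbK => /eqP ->.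
    by rewrite addr0 subrr.
  rewrite /k; apply: (big_rec2 (fun n p => V p Q n)); first exact: V_0.
  move=> mu y1 y2 _ hy; apply: V_mul => //.
  elim: (ii mu) => [|n IH]; first exact: V_0.
  by rewrite exprS -add1n; apply: V_mul.
have [Om eOm] := Gdiv hq hq0 hF hfrob hV.
pose g : {poly F} := 'X^(q ^ 2) - 'X.
have sg : size g = (q ^ 2).+1.
  rewrite /g size_polyDl size_polyXn // size_polyN size_polyX ltnS.
  by rewrite (leq_trans hq) // -{1}(expn1 q) leq_exp2l // ltnW.
have g0 : g != 0 by rewrite -size_poly_eq0 sg.
have gk0 : g ^+ k != 0 by rewrite expf_neq0.
have hGk : hG F q ^+ k = (g ^+ k)%:P by rewrite hG_C polyC_exp.
exists Om; split => //; last first.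
  move=> Om' _ e'.
  have e2 : eqH q (hG F q ^+ k * Om) (hG F q ^+ k * Om').
    apply: (eqH_trans hq _ e'). exact: (eqH_sym hq eOm).
  rewrite hGk in e2; apply: (eqH_cancel hq gk0). exact: e2.
set D := (q ^ 3 + 2 * genus q - 1)%N.
have gen1 : (1 <= genus q)%N.
  rewrite /genus divn_gt0 //; move: hq; case: (q) => [|[|q']] // _.
  by rewrite subn1 /= mulSn mulnS; lia.
have hD : forall mu, wle q (hred q (f mu) - hred q (Rr mu)) D.
  move=> mu; apply: wle_add.
    apply: wle_le; first exact: (proj1 (degH_wle q (f mu) mH) (hf mu)).
    by rewrite /D; move: (hmH2); lia.
  apply: wle_opp; apply: wle_le; first exact: (proj1 (degH_wle q (Rr mu) _) (leqnn _)).
  by rewrite /D; move: (hRdeg mu) gen1; lia.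
pose L2 := hred q Lam * \prod_(mu < h) (hred q (f mu) - hred q (Rr mu)) ^+ ii mu.
have eL : eqH q lhs L2.
  apply: (eqH_mul hq (eqH_red hq Lam)).
  apply: (big_rec2 (fun a b => eqH q a b)); first exact: eqH_refl.
  move=> mu y1 y2 _ hy; apply: (eqH_mul hq _ hy); apply: (eqH_exp hq).
  exact: (eqH_add hq (eqH_red hq _) (eqH_opp hq (eqH_red hq _))).
have wL2 : wle q L2 (degH q Lam + k * D).
  rewrite /L2; apply: (wle_mul hq); first exact: (proj1 (degH_wle q Lam _) (leqnn _)).
  by rewrite /k; apply: (wle_prod hq hD).
have wl : wle q ((g ^+ k)%:P * hred q Om) (degH q Lam + k * D).
  rewrite -hredC // -hGk -(eqH_hred hq eOm) (eqH_hred hq eL).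
  move=> j0 i0 nz0; exact: (wle_hred hq wL2 nz0).
apply/degH_wle => j i nz.
have := wle_Cmul hq gk0 wl nz.
have hsk : (size (g ^+ k)%R).-1 = (q ^ 2 * k)%N.
  by rewrite size_exp sg.
rewrite hsk.
rewrite /bound /D.
have e3 : (q ^ 2 * k * q = k * q ^ 3)%N by rewrite [RHS]mulnC (expnSr q 2) mulnAC.
rewrite e3.
have e4 : (k * (q ^ 3 + 2 * genus q - 1) = k * q ^ 3 + k * (2 * genus q - 1))%N.
  by rewrite -mulnDr addnBA // muln_gt0.
rewrite e4; move: (k * q ^ 3)%N (k * (2 * genus q - 1))%N (i * q + j * q.+1)%N.
move=> *; lia.
Qed.
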